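(* Assume $\rho\in(\frac14,\frac12)$. Then, as $h\to0_+$, \[ \lambda_1(\mathcal H_h)=-1-h^{1/2}-\frac12h+o(h). \]
   Context: For $h\in(0,1)$ with $h^{\frac12-\rho}<\frac13$, let $\delta=h^{\rho-\frac12}$. $\mathcal H_h$ is the self-adjoint operator in the weighted space $L^2((0,\delta);(1-h^{1/2}\tau)d\tau)$ associated with the closed quadratic form \[ q_h(u)=\int_0^\delta|u'(\tau)|^2(1-h^{1/2}\tau)\,d\tau-|u(0)|^2 \] on $\{u\in H^1((0,\delta)):u(\delta)=0\}$; it acts as $-\frac{d^2}{d\tau^2}+\frac{h^{1/2}}{1-h^{1/2}\tau}\frac{d}{d\tau}$ with domain $\{u\in H^2((0,\delta)):u'(0)=-u(0),\ u(\delta)=0\}$. $\lambda_1(\mathcal H_h)$ is its lowest eigenvalue. *)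

(* Defs.v *)
From Stdlib Require Import Reals Lra.
Open Scope R_scope.

Definition delta (h rho : R) : R := Rpower h (rho - 1/2).

Definition is_eigenfunction (h rho lam : R) (u u1 u2 : R -> R) : Prop :=
  (forall x, 0 <= x <= delta h rho -> derivable_pt_lim u x (u1 x)) /\
  (forall x, 0 <= x <= delta h rho -> derivable_pt_lim u1 x (u2 x)) /\
  u1 0 = - u 0 /\
  u (delta h rho) = 0 /\
  (forall x, 0 <= x <= delta h rho ->
     - u2 x + sqrt h / (1 - sqrt h * x) * u1 x = lam * u x) /\
  (exists x, 0 <= x <= delta h rho /\ u x <> 0).

Definition is_eigenvalue (h rho lam : R) : Prop :=
  exists u u1 u2 : R -> R, is_eigenfunction h rho lam u u1 u2.

Definition is_lowest_eigenvalue (h rho lam : R) : Prop :=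
  is_eigenvalue h rho lam /\ (forall mu, is_eigenvalue h rho mu -> lam <= mu).

(* Main.v *)
Require Import Defs.
From Stdlib Require Import Reals.
Open Scope R_scope.
From Stdlib Require Import Lra Lia Psatz Classical.
From Coquelicot Require Import Coquelicot.
Open Scope R_scope.

Fixpoint cc (n : nat) : R :=
  match n with
  | O => 1
  | S m => cc m / (INR (S m) * INR (S m))
  end.

Fixpoint qq (n : nat) : R :=
  match n with
  | O => 0
  | S m => (qq m + INR (S m) * cc (S m)) / (INR (S m) * INR (S m))
  end.

Lemma cc_S n : cc (S n) = cc n / (INR (S n) * INR (S n)).
Proof. reflexivity. Qed.
Lemma qq_S n : qq (S n) = (qq n + INR (S n) * cc (S n)) / (INR (S n) * INR (S n)).
Proof. reflexivity. Qed.

Lemma INRS_pos n : 0 < INR (S n).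
Proof. apply lt_0_INR; lia. Qed.
Lemma INRS_ge1 n : 1 <= INR (S n).
Proof. rewrite S_INR; pose proof (pos_INR n); lra. Qed.

Lemma cc_pos n : 0 < cc n.
Proof.
  induction n. simpl; lra.
  rewrite cc_S. pose proof (INRS_pos n). apply Rdiv_lt_0_compat; nra.
Qed.

Lemma qq_ge_cc n : (1 <= n)%nat -> cc n <= qq n.
Proof.
  induction n; intros H. lia.
  destruct n.
  - rewrite qq_S, cc_S. simpl. lra.
  - assert (IH : cc (S n) <= qq (S n)) by (apply IHn; lia).
    rewrite qq_S, (cc_S (S n)).
    pose proof (INRS_ge1 (S n)). pose proof (cc_pos (S n)).
    set (m := INR (S (S n))) in *.
    apply Rmult_le_reg_r with (m*m). nra.
    unfold Rdiv. rewrite !Rmult_assoc, Rinv_l by nra.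
    assert (0 <= cc (S n) * / (m*m)) by (apply Rmult_le_pos; [lra| left; apply Rinv_0_lt_compat; nra]).
    nra.
Qed.

Lemma qq_pos n : (1 <= n)%nat -> 0 < qq n.
Proof. intros; pose proof (cc_pos n); pose proof (qq_ge_cc n H); lra. Qed.

Lemma CV_cc : CV_radius cc = p_infty.
Proof.
  apply CV_radius_infinite_DAlembert.
  - intro n; pose proof (cc_pos n); lra.
  - apply is_lim_seq_le_le with (u := fun _ => 0) (w := fun n => / INR (S n)).
    + intro n. rewrite cc_S. pose proof (cc_pos n). pose proof (INRS_ge1 n).
      replace (cc n / (INR (S n) * INR (S n)) / cc n) with (/ (INR (S n) * INR (S n))) by (field; lra).
      rewrite Rabs_pos_eq by (left; apply Rinv_0_lt_compat; nra).
      split. left; apply Rinv_0_lt_compat; nra.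
      apply Rinv_le_contravar; nra.
    + apply is_lim_seq_const.
    + apply (is_lim_seq_incr_1 (fun n => / INR n)).
      apply (is_lim_seq_inv INR p_infty is_lim_seq_INR). discriminate.
Qed.

Lemma qq_ratio m : (1 <= m)%nat -> qq (S m) <= qq m * (2 / INR (S m)).
Proof.
  intros Hm. rewrite qq_S, cc_S.
  pose proof (qq_ge_cc m Hm). pose proof (cc_pos m). pose proof (INRS_ge1 m).
  set (k := INR (S m)) in *.
  assert (cc m / (k*k) <= qq m).
  { apply Rle_trans with (cc m); [|lra]. unfold Rdiv.
    rewrite <- (Rmult_1_r (cc m)) at 2. apply Rmult_le_compat_l. lra.
    rewrite <- Rinv_1. apply Rinv_le_contravar; nra. }
  apply Rmult_le_reg_r with (k*k). nra.
  unfold Rdiv. rewrite Rmult_assoc, Rinv_l by nra. rewrite Rmult_1_r.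
  replace (qq m * (2 * / k) * (k * k)) with (2 * qq m * k) by (field; lra).
  unfold Rdiv in H2. nra.
Qed.

Lemma CV_qq : CV_radius qq = p_infty.
Proof.
  rewrite <- (CV_radius_ext (PS_incr_1 (fun n => qq (S n)))).
  2:{ intros [|n]; reflexivity. }
  rewrite CV_radius_incr_1.
  apply CV_radius_infinite_DAlembert.
  - intro n; pose proof (qq_pos (S n) ltac:(lia)); lra.
  - apply is_lim_seq_le_le with (u := fun _ => 0) (w := fun n => 2 * / INR (S n)).
    + intro n. cbv beta. pose proof (qq_pos (S n) ltac:(lia)). pose proof (qq_pos (S (S n)) ltac:(lia)).
      pose proof (qq_ratio (S n) ltac:(lia)).
      pose proof (INRS_ge1 n). pose proof (INRS_ge1 (S n)).
      rewrite Rabs_pos_eq by (left; apply Rdiv_lt_0_compat; lra).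
      split. left; apply Rdiv_lt_0_compat; lra.
      apply Rmult_le_reg_r with (qq (S n)). lra.
      unfold Rdiv. rewrite Rmult_assoc, Rinv_l, Rmult_1_r by lra.
      eapply Rle_trans. apply H1.
      assert (2 / INR (S (S n)) <= 2 * / INR (S n)).
      { unfold Rdiv. apply Rmult_le_compat_l. lra.
        apply Rinv_le_contravar. lra. rewrite (S_INR (S n)). lra. }
      nra.
    + apply is_lim_seq_const.
    + replace 0 with (2 * 0) by ring.
      apply (is_lim_seq_scal_l _ 2 0).
      apply (is_lim_seq_incr_1 (fun n => / INR n)).
      apply (is_lim_seq_inv INR p_infty is_lim_seq_INR). discriminate.
Qed.

Lemma isd_cont f x l : is_derive f x l -> continuity_pt f x.
Proof. intro H. apply is_derive_Reals in H. apply derivable_continuous_pt. exists l. exact H. Qed.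

Definition Pf (w : R) := PSeries cc w.
Definition P1f (w : R) := PSeries (PS_derive cc) w.
Definition P2f (w : R) := PSeries (PS_derive (PS_derive cc)) w.
Definition Qf (w : R) := PSeries qq w.
Definition Q1f (w : R) := PSeries (PS_derive qq) w.
Definition Q2f (w : R) := PSeries (PS_derive (PS_derive qq)) w.

Lemma rad_c x : Rbar_lt (Rabs x) (CV_radius cc).
Proof. rewrite CV_cc; exact I. Qed.
Lemma rad_c1 x : Rbar_lt (Rabs x) (CV_radius (PS_derive cc)).
Proof. rewrite CV_radius_derive, CV_cc; exact I. Qed.
Lemma rad_c2 x : Rbar_lt (Rabs x) (CV_radius (PS_derive (PS_derive cc))).
Proof. rewrite !CV_radius_derive, CV_cc; exact I. Qed.
Lemma rad_q x : Rbar_lt (Rabs x) (CV_radius qq).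
Proof. rewrite CV_qq; exact I. Qed.
Lemma rad_q1 x : Rbar_lt (Rabs x) (CV_radius (PS_derive qq)).
Proof. rewrite CV_radius_derive, CV_qq; exact I. Qed.
Lemma rad_q2 x : Rbar_lt (Rabs x) (CV_radius (PS_derive (PS_derive qq))).
Proof. rewrite !CV_radius_derive, CV_qq; exact I. Qed.

Lemma dP w : is_derive Pf w (P1f w).
Proof. apply is_derive_PSeries, rad_c. Qed.
Lemma dP1 w : is_derive P1f w (P2f w).
Proof. apply is_derive_PSeries, rad_c1. Qed.
Lemma dQ w : is_derive Qf w (Q1f w).
Proof. apply is_derive_PSeries, rad_q. Qed.
Lemma dQ1 w : is_derive Q1f w (Q2f w).
Proof. apply is_derive_PSeries, rad_q1. Qed.

Lemma DP w : Derive (fun x => Pf x) w = P1f w.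
Proof. apply is_derive_unique, dP. Qed.
Lemma DP1 w : Derive (fun x => P1f x) w = P2f w.
Proof. apply is_derive_unique, dP1. Qed.
Lemma DQ w : Derive (fun x => Qf x) w = Q1f w.
Proof. apply is_derive_unique, dQ. Qed.
Lemma DQ1 w : Derive (fun x => Q1f x) w = Q2f w.
Proof. apply is_derive_unique, dQ1. Qed.

Lemma exP w : ex_derive (fun x => Pf x) w.
Proof. eexists; apply dP. Qed.
Lemma exP1 w : ex_derive (fun x => P1f x) w.
Proof. eexists; apply dP1. Qed.
Lemma exQ w : ex_derive (fun x => Qf x) w.
Proof. eexists; apply dQ. Qed.
Lemma exQ1 w : ex_derive (fun x => Q1f x) w.
Proof. eexists; apply dQ1. Qed.

Lemma P_ode w : w * P2f w + P1f w = Pf w.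
Proof.
  unfold P2f, P1f, Pf.
  rewrite <- PSeries_incr_1.
  rewrite <- PSeries_plus.
  2: apply ex_pseries_incr_1, CV_radius_inside, rad_c2.
  2: apply CV_radius_inside, rad_c1.
  apply PSeries_ext. intros [|n].
  - unfold PS_plus, PS_incr_1, PS_derive. simpl.
    rewrite plus_zero_l. field.
  - cbv beta iota delta [PS_plus PS_incr_1 PS_derive].
    change (plus ?a ?b) with (Rplus a b).
    rewrite (cc_S (S n)).
    pose proof (INRS_pos (S n)).
    rewrite (S_INR (S n)). field. rewrite <- S_INR. lra.
Qed.

Lemma Q_ode w : w * Q2f w + Q1f w = Qf w + P1f w.
Proof.
  unfold Q2f, Q1f, Qf, P1f.
  rewrite <- PSeries_incr_1.
  rewrite <- !PSeries_plus.
  2: apply CV_radius_inside, rad_q.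
  2: apply CV_radius_inside, rad_c1.
  2: apply ex_pseries_incr_1, CV_radius_inside, rad_q2.
  2: apply CV_radius_inside, rad_q1.
  apply PSeries_ext. intros [|n].
  - unfold PS_plus, PS_incr_1, PS_derive. simpl.
    rewrite plus_zero_l. unfold plus; simpl. field.
  - cbv beta iota delta [PS_plus PS_incr_1 PS_derive].
    change (plus ?a ?b) with (Rplus a b).
    rewrite (qq_S (S n)).
    pose proof (INRS_pos (S n)).
    rewrite (S_INR (S n)). field. rewrite <- S_INR. lra.
Qed.

Lemma P0 : Pf 0 = 1.
Proof. unfold Pf. rewrite PSeries_0. reflexivity. Qed.

Lemma P_ge1 w : 0 <= w -> 1 <= Pf w.
Proof.
  intros Hw. unfold Pf. rewrite PSeries_decr_1 by (apply CV_radius_inside, rad_c).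
  assert (0 <= PSeries (PS_decr_1 cc) w).
  { rewrite <- (PSeries_const_0 w). unfold PSeries. apply Series_le.
    - intro n. split. rewrite Rmult_0_l; lra.
      rewrite Rmult_0_l. apply Rmult_le_pos. left; apply cc_pos. apply pow_le; lra.
    - assert (H := CV_radius_inside (PS_decr_1 cc) w).
      rewrite CV_radius_decr_1 in H. specialize (H (rad_c w)).
      destruct H as [l Hl]. exists l.
      eapply is_series_ext; [|apply Hl]. intro n. simpl. unfold scal; simpl.
      rewrite pow_n_pow. change (mult ?a ?b) with (Rmult a b). ring. }
  simpl. nra.
Qed.

Definition Wr (w : R) := -(1/2) * Pf w ^ 2 + w * (Pf w * Q1f w - P1f w * Qf w).

Lemma Wr_const w : Wr w = -(1/2).
Proof.
  assert (HD : forall x, is_derive Wr x 0).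
  { intro x. unfold Wr.
    auto_derive. repeat split; auto using exP, exP1, exQ, exQ1.
    rewrite DP, DP1, DQ, DQ1.
    pose proof (f_equal (fun t => Pf x * t) (Q_ode x)) as E1.
    pose proof (f_equal (fun t => Qf x * t) (P_ode x)) as E2.
    simpl in E1, E2. lra. }
  assert (Wr 0 = -(1/2)).
  { unfold Wr. rewrite P0. ring. }
  rewrite <- H.
  destruct (MVT_gen Wr 0 w (fun _ => 0)) as [c [_ Hc]].
  - intros; apply HD.
  - intros x _. eapply isd_cont, HD.
  - lra.
Qed.

Definition wv s k x := k * (1 - s*x)^2.
Definition Lv s x := ln (1 - s*x).

Lemma dwv s k x : is_derive (wv s k) x (-2*s*k*(1-s*x)).
Proof. unfold wv. auto_derive. auto. ring. Qed.
Lemma Dwv s k x : Derive (fun t => wv s k t) x = -2*s*k*(1-s*x).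
Proof. apply is_derive_unique, dwv. Qed.
Lemma exwv s k x : ex_derive (fun t => wv s k t) x.
Proof. eexists; apply dwv. Qed.
Lemma dLv s x : 0 < 1 - s*x -> is_derive (Lv s) x (- s / (1 - s*x)).
Proof. intro H. unfold Lv. auto_derive. lra. field. lra. Qed.
Lemma DLv s x : 0 < 1 - s*x -> Derive (fun t => Lv s t) x = - s / (1 - s*x).
Proof. intro; apply is_derive_unique, dLv; auto. Qed.
Lemma exLv s x : 0 < 1 - s*x -> ex_derive (fun t => Lv s t) x.
Proof. intro; eexists; apply dLv; auto. Qed.

Definition Af s k x := Pf (wv s k x).
Definition A1f s k x := P1f (wv s k x) * (-2*s*k*(1-s*x)).
Definition A2f s k x := P2f (wv s k x) * (4*s^2*k^2*(1-s*x)^2) + P1f (wv s k x) * (2*s^2*k).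
Definition Bf s k x := - Lv s x * Pf (wv s k x) + Qf (wv s k x).
Definition B1f s k x := s / (1 - s*x) * Pf (wv s k x)
   + (- Lv s x * P1f (wv s k x) + Q1f (wv s k x)) * (-2*s*k*(1-s*x)).
Definition B2f s k x := s^2 / (1 - s*x)^2 * Pf (wv s k x)
   + 2 * (s / (1 - s*x)) * P1f (wv s k x) * (-2*s*k*(1-s*x))
   + (- Lv s x * P2f (wv s k x) + Q2f (wv s k x)) * (4*s^2*k^2*(1-s*x)^2)
   + (- Lv s x * P1f (wv s k x) + Q1f (wv s k x)) * (2*s^2*k).

Lemma dA s k x : is_derive (Af s k) x (A1f s k x).
Proof.
  unfold Af, A1f. auto_derive. repeat split; auto using exP, exwv.
  rewrite DP, Dwv. ring.
Qed.

Lemma dA1 s k x : is_derive (A1f s k) x (A2f s k x).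
Proof.
  unfold A1f, A2f. auto_derive. repeat split; auto using exP1, exwv.
  rewrite DP1, Dwv. ring.
Qed.

Lemma dB s k x : 0 < 1 - s*x -> is_derive (Bf s k) x (B1f s k x).
Proof.
  intro H. unfold Bf, B1f. auto_derive. repeat split; auto using exP, exQ, exwv, exLv.
  rewrite DP, DQ, Dwv, DLv by auto. field. lra.
Qed.

Lemma dB1 s k x : 0 < 1 - s*x -> is_derive (B1f s k) x (B2f s k x).
Proof.
  intro H. unfold B1f, B2f. auto_derive. repeat split; auto using exP, exQ, exP1, exQ1, exwv, exLv; try lra.
  rewrite DP, DP1, DQ1, Dwv, DLv by auto. field. lra.
Qed.

Ltac genW s k x :=
  let W := fresh "W" in
  set (W := wv s k x) in *;
  assert (HW : W = k*(1-s*x)^2) by (unfold W, wv; ring);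
  set (p := Pf W) in *; set (p1 := P1f W) in *; set (p2 := P2f W) in *;
  set (q := Qf W) in *; set (q1 := Q1f W) in *; set (q2 := Q2f W) in *;
  set (L := Lv s x) in *;
  clearbody p p1 p2 q q1 q2 L; clearbody W; subst W.

Lemma odeA s k x : 0 < 1 - s*x ->
  - A2f s k x + s / (1 - s*x) * A1f s k x = -4*s^2*k * Af s k x.
Proof.
  intro H. unfold A2f, A1f, Af.
  pose proof (P_ode (wv s k x)) as E.
  genW s k x.
  assert (p = k*(1-s*x)^2*p2 + p1) by lra. subst p.
  field. lra.
Qed.

Lemma odeB s k x : 0 < 1 - s*x ->
  - B2f s k x + s / (1 - s*x) * B1f s k x = -4*s^2*k * Bf s k x.
Proof.
  intro H. unfold B2f, B1f, Bf.
  pose proof (P_ode (wv s k x)) as E.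
  pose proof (Q_ode (wv s k x)) as E2.
  genW s k x.
  assert (q = k*(1-s*x)^2*q2 + q1 - p1) by lra. subst q.
  assert (p = k*(1-s*x)^2*p2 + p1) by lra. subst p.
  field. lra.
Qed.

Lemma wronsk s k x : 0 < 1 - s*x ->
  (1 - s*x) * (Af s k x * B1f s k x - A1f s k x * Bf s k x) = s.
Proof.
  intro H. unfold B1f, Bf, A1f, Af.
  pose proof (Wr_const (wv s k x)) as E. unfold Wr in E.
  genW s k x.
  transitivity (-2*s*(-(1/2)*p^2 + k*(1-s*x)^2*(p*q1 - p1*q))).
  field; lra. rewrite E. field.
Qed.

Lemma Dun f x l : is_derive f x l -> Derive (fun t => f t) x = l.
Proof. intro H. apply is_derive_unique. exact H. Qed.

Lemma mvt_open (f f' : R -> R) a b :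
  a < b -> (forall c, a <= c <= b -> is_derive f c (f' c)) ->
  exists c, f b - f a = f' c * (b - a) /\ a < c < b.
Proof. intros H1 H2. apply MVT_cor2; auto. intros c Hc. apply is_derive_Reals, H2, Hc. Qed.

Lemma sturm_W (s d lam : R) (u u1 u2 ph ph1 ph2 : R -> R) a b :
  0 <= a -> a < b -> b <= d ->
  (forall x, 0 <= x <= d -> 0 < 1 - s*x) ->
  (forall x, 0 <= x <= d -> is_derive u x (u1 x)) ->
  (forall x, 0 <= x <= d -> is_derive u1 x (u2 x)) ->
  (forall x, 0 <= x <= d -> is_derive ph x (ph1 x)) ->
  (forall x, 0 <= x <= d -> is_derive ph1 x (ph2 x)) ->
  (forall x, 0 <= x <= d -> - u2 x + s/(1-s*x) * u1 x = lam * u x) ->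
  (forall x, a < x < b -> u x * (-s*ph1 x + (1-s*x)*ph2 x + lam*(1-s*x)*ph x) < 0) ->
  (1-s*b)*(ph1 b * u b - ph b * u1 b) < (1-s*a)*(ph1 a * u a - ph a * u1 a).
Proof.
  intros Ha Hab Hb Hy Du Du1 Dp Dp1 Eq Hs.
  set (W := fun x => (1-s*x)*(ph1 x * u x - ph x * u1 x)).
  assert (DW : forall x, 0 <= x <= d ->
     is_derive W x (u x * (-s*ph1 x + (1-s*x)*ph2 x + lam*(1-s*x)*ph x))).
  { intros x Hx. unfold W.
    assert (E := Eq x Hx). specialize (Hy x Hx).
    pose proof (Du x Hx) as H1. pose proof (Du1 x Hx) as H2.
    pose proof (Dp x Hx) as H3. pose proof (Dp1 x Hx) as H4.
    auto_derive.
    - repeat split; eexists; eassumption.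
    - rewrite (Dun _ _ _ H1), (Dun _ _ _ H2), (Dun _ _ _ H3), (Dun _ _ _ H4).
      assert (u2 x = s/(1-s*x) * u1 x - lam * u x) by lra.
      rewrite H. field. lra. }
  destruct (mvt_open W (fun x => u x * (-s*ph1 x + (1-s*x)*ph2 x + lam*(1-s*x)*ph x)) a b)
    as [c [HE Hc]]; auto.
  - intros x Hx. apply DW. lra.
  - change ((W b) < (W a)). specialize (Hs c Hc). nra.
Qed.

Lemma cont_near f b : continuity_pt f b -> f b <> 0 ->
  exists eta, 0 < eta /\ forall z, Rabs (z - b) < eta -> Rabs (f z - f b) < Rabs (f b) / 2.
Proof.
  intros Hc Hn.
  assert (Hp : 0 < Rabs (f b) / 2) by (pose proof (Rabs_pos_lt _ Hn); lra).
  destruct (Hc _ Hp) as [eta [Heta H]].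
  exists eta. split. lra. intros z Hz.
  destruct (Req_dec z b) as [->|Hzb].
  - rewrite Rminus_diag, Rabs_R0. lra.
  - apply (H z). split. split. exact I. auto. exact Hz.
Qed.

Lemma comp_gen (f : R -> R) x1 q : x1 <= q -> 0 < f x1 ->
  (forall x, x1 <= x <= q -> continuity_pt f x) ->
  exists b, x1 <= b <= q /\ (forall y, x1 <= y < b -> 0 < f y) /\ 0 <= f b /\ (f b = 0 \/ b = q).
Proof.
  intros Hq Hx1 Hc.
  set (E := fun x => x1 <= x <= q /\ forall y, x1 <= y <= x -> 0 < f y).
  assert (HB : bound E) by (exists q; intros x [Hx _]; lra).
  assert (HE : exists x, E x) by (exists x1; split; [lra| intros y Hy; replace y with x1 by lra; auto]).
  destruct (completeness E HB HE) as [b [Hub Hlub]].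
  assert (Hb1 : x1 <= b) by (apply Hub; destruct HE; unfold E; split; [lra| intros y Hy; replace y with x1 by lra; auto]).
  assert (Hb2 : b <= q) by (apply Hlub; intros x [Hx _]; lra).
  assert (Hpos : forall y, x1 <= y < b -> 0 < f y).
  { intros y Hy. destruct (Rle_dec b y) as [Hby|Hby]. lra.
    destruct (classic (exists x, E x /\ y < x)) as [[x [[_ Hx] Hyx]]|Hno].
    - apply Hx. lra.
    - exfalso. assert (b <= y). { apply Hlub. intros x Hx. destruct (Rle_dec x y); auto.
        exfalso; apply Hno; exists x; split; auto; lra. } lra. }
  assert (Hnneg : 0 <= f b).
  { destruct (Rle_dec 0 (f b)) as [|Hn]; auto. exfalso.
    destruct (cont_near f b (Hc b ltac:(lra))) as [eta [He Hz]]; [lra|].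
    destruct (Req_dec b x1) as [->|Hbx]. lra.
    set (y := Rmax x1 (b - eta/2)).
    assert (x1 <= y < b) by (unfold y; unfold Rmax; destruct Rle_dec; lra).
    specialize (Hpos y H). specialize (Hz y).
    assert (Rabs (y - b) < eta) by (unfold y, Rmax in *; destruct Rle_dec; rewrite Rabs_left by lra; lra).
    specialize (Hz H0). rewrite (Rabs_left (f b)) in Hz by lra.
    apply Rabs_def2 in Hz. lra. }
  exists b. repeat split; auto.
  destruct (Req_dec (f b) 0) as [|Hn]; auto.
  destruct (Req_dec b q) as [|Hbq]; auto. exfalso.
  destruct (cont_near f b (Hc b ltac:(lra))) as [eta [He Hz]]; auto.
  assert (0 < f b) by lra. rewrite (Rabs_pos_eq (f b)) in Hz by lra.
  set (x := Rmin q (b + eta/2)).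
  assert (b < x <= q) by (unfold x, Rmin; destruct Rle_dec; lra).
  assert (E x).
  { split. lra. intros y Hy. destruct (Rlt_dec y b). apply Hpos; lra.
    assert (Rabs (y - b) < eta) by (unfold x, Rmin in *; destruct Rle_dec; rewrite Rabs_pos_eq by lra; lra).
    specialize (Hz y H1). apply Rabs_def2 in Hz. lra. }
  specialize (Hub x H1). lra.
Qed.

Lemma deriv_zero_right f b l x1 : x1 < b -> f b = 0 ->
  (forall y, x1 <= y < b -> 0 < f y) -> is_derive f b l -> l <= 0.
Proof.
  intros Hb Hf Hp Hd. apply is_derive_Reals in Hd.
  destruct (Rle_dec l 0) as [|Hl]; auto. exfalso.
  destruct (Hd (l/2) ltac:(lra)) as [del Hdel].
  set (h := - Rmin (del/2) ((b - x1)/2)).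
  assert (Hh : - (b-x1)/2 <= h < 0 /\ Rabs h < del).
  { pose proof (cond_pos del). unfold h, Rmin; destruct Rle_dec; split; try split; try lra;
    rewrite Rabs_left by lra; lra. }
  destruct Hh as [[Hh1 Hh2] Hh3].
  specialize (Hdel h ltac:(lra) Hh3). rewrite Hf, Rminus_0_r in Hdel.
  specialize (Hp (b + h) ltac:(lra)).
  apply Rabs_def2 in Hdel.
  assert (/h < 0) by (apply Rinv_lt_0_compat; lra).
  assert (f (b+h) / h < 0) by (unfold Rdiv; nra).
  lra.
Qed.

Lemma deriv_zero_left f a l x1 : a < x1 -> f a = 0 ->
  (forall y, a < y <= x1 -> 0 < f y) -> is_derive f a l -> 0 <= l.
Proof.
  intros Hb Hf Hp Hd. apply is_derive_Reals in Hd.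
  destruct (Rle_dec 0 l) as [|Hl]; auto. exfalso.
  destruct (Hd (-l/2) ltac:(lra)) as [del Hdel].
  set (h := Rmin (del/2) ((x1 - a)/2)).
  assert (Hh : 0 < h <= (x1-a)/2 /\ Rabs h < del).
  { pose proof (cond_pos del). unfold h, Rmin; destruct Rle_dec; split; try split; try lra;
    rewrite Rabs_pos_eq by lra; lra. }
  destruct Hh as [[Hh1 Hh2] Hh3].
  specialize (Hdel h ltac:(lra) Hh3). rewrite Hf, Rminus_0_r in Hdel.
  specialize (Hp (a + h) ltac:(lra)).
  apply Rabs_def2 in Hdel.
  assert (0 < /h) by (apply Rinv_0_lt_compat; lra).
  assert (0 < f (a+h) / h) by (unfold Rdiv; nra).
  lra.
Qed.

Lemma exd_cont f x : ex_derive f x -> continuity_pt f x.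
Proof. intros [l H]. eapply isd_cont; eauto. Qed.

Lemma minimal_pos (s d lam mu : R) (v v1 v2 w w1 w2 : R -> R) x1 :
  (forall x, 0 <= x <= d -> 0 < 1 - s*x) ->
  (forall x, 0 <= x <= d -> is_derive v x (v1 x)) ->
  (forall x, 0 <= x <= d -> is_derive v1 x (v2 x)) ->
  (forall x, 0 <= x <= d -> is_derive w x (w1 x)) ->
  (forall x, 0 <= x <= d -> is_derive w1 x (w2 x)) ->
  (forall x, 0 <= x <= d -> - v2 x + s/(1-s*x) * v1 x = lam * v x) ->
  (forall x, 0 <= x <= d -> - w2 x + s/(1-s*x) * w1 x = mu * w x) ->
  v1 0 = - v 0 -> w1 0 = - w 0 -> w d = 0 ->
  (forall x, 0 <= x < d -> 0 < v x) -> 0 <= v d ->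
  0 <= x1 <= d -> 0 < w x1 -> lam <= mu.
Proof.
  intros Hy Dv Dv1 Dw Dw1 Ev Ew Rv Rw Wd Vpos Vd Hx1 Wx1.
  destruct (Rle_dec lam mu) as [|Hlt]; auto. exfalso.
  destruct (comp_gen w x1 d) as [b [Hb [Hpb [Hwb0 Hwb]]]]; try lra.
  { intros x Hx. eapply isd_cont, Dw. lra. }
  assert (Wb : w b = 0) by (destruct Hwb as [ | -> ]; auto).
  assert (Hxb : x1 < b) by (destruct (Req_dec x1 b) as [<-|]; [lra|lra]).
  destruct (comp_gen (fun y => w (- y)) (- x1) 0) as [b' [Hb' [Hpb' [Hwb0' Hwb']]]]; try lra.
  { rewrite Ropp_involutive; auto. }
  { intros x Hx. apply exd_cont. auto_derive. eexists. apply Dw. lra. }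
  set (a := - b') in *.
  assert (Ha : 0 <= a <= x1) by (unfold a; lra).
  assert (Hpa : forall y, a < y <= x1 -> 0 < w y).
  { intros y Hy0. replace y with (- - y) by ring. apply Hpb'. unfold a in Hy0. lra. }
  assert (Hab : a < b) by lra.
  pose proof (sturm_W s d mu w w1 w2 v v1 v2 a b ltac:(lra) Hab ltac:(lra) Hy Dw Dw1 Dv Dv1 Ew) as HS.
  assert (HW : (1 - s * b) * (v1 b * w b - v b * w1 b) <
               (1 - s * a) * (v1 a * w a - v a * w1 a)).
  { apply HS. intros x Hx.
    assert (Hx0 : 0 <= x <= d) by lra.
    specialize (Ev x Hx0). specialize (Hy x Hx0).
    assert (v2 x = s/(1-s*x) * v1 x - lam * v x) by lra.
    rewrite H.
    replace (-s*v1 x + (1-s*x)*(s/(1-s*x) * v1 x - lam * v x) + mu*(1-s*x)*v x)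
      with ((mu - lam)*(1-s*x)*v x) by (field; lra).
    assert (0 < w x) by (destruct (Rle_dec x x1); [apply Hpa; lra| apply Hpb; lra]).
    assert (0 < v x) by (apply Vpos; lra).
    assert (0 < (lam - mu)*(1-s*x)*v x) by (apply Rmult_lt_0_compat; [apply Rmult_lt_0_compat|]; lra).
    nra. }
  assert (Hw1b : w1 b <= 0) by (eapply deriv_zero_right with (x1 := x1); eauto; apply Dw; lra).
  assert (Hvb : 0 <= v b) by (destruct (Req_dec b d) as [->|]; auto; left; apply Vpos; lra).
  assert (HWb : 0 <= (1 - s * b) * (v1 b * w b - v b * w1 b)).
  { rewrite Wb. specialize (Hy b ltac:(lra)). apply Rmult_le_pos; nra. }
  assert (HWa : (1 - s * a) * (v1 a * w a - v a * w1 a) <= 0).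
  { destruct Hwb' as [Hwa|Ha0].
    - replace (- b') with a in Hwa by reflexivity.
      assert (Hax : a < x1) by (destruct (Req_dec a x1) as [e|]; [rewrite e in Hwa; lra| lra]).
      assert (0 <= w1 a) by (eapply deriv_zero_left with (x1 := x1); eauto; apply Dw; lra).
      assert (0 <= v a) by (left; apply Vpos; lra).
      rewrite Hwa. specialize (Hy a ltac:(lra)).
      assert (0 <= (1 - s*a) * (v a * w1 a)) by (apply Rmult_le_pos; nra). nra.
    - assert (a = 0) by (unfold a; lra). rewrite H. rewrite Rv, Rw. lra. }
  lra.
Qed.

Definition uf s k d x := Bf s k d * Af s k x - Af s k d * Bf s k x.
Definition u1f s k d x := Bf s k d * A1f s k x - Af s k d * B1f s k x.
Definition u2f s k d x := Bf s k d * A2f s k x - Af s k d * B2f s k x.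

Lemma du s k d x : 0 < 1 - s*x -> is_derive (uf s k d) x (u1f s k d x).
Proof.
  intro H. unfold uf, u1f.
  pose proof (dA s k x). pose proof (dB s k x H).
  auto_derive. repeat split; eexists; eauto.
  rewrite (Dun _ _ _ H0), (Dun _ _ _ H1). ring.
Qed.

Lemma du1 s k d x : 0 < 1 - s*x -> is_derive (u1f s k d) x (u2f s k d x).
Proof.
  intro H. unfold u1f, u2f.
  pose proof (dA1 s k x). pose proof (dB1 s k x H).
  auto_derive. repeat split; eexists; eauto.
  rewrite (Dun _ _ _ H0), (Dun _ _ _ H1). ring.
Qed.

Lemma ode_u s k d x : 0 < 1 - s*x ->
  - u2f s k d x + s / (1 - s*x) * u1f s k d x = -4*s^2*k * uf s k d x.
Proof.
  intro H. unfold u2f, u1f, uf.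
  pose proof (odeA s k x H). pose proof (odeB s k x H).
  transitivity (Bf s k d * (- A2f s k x + s / (1 - s*x) * A1f s k x)
     - Af s k d * (- B2f s k x + s / (1 - s*x) * B1f s k x)). ring.
  rewrite H0, H1. ring.
Qed.

Lemma u_d s k d : uf s k d d = 0.
Proof. unfold uf. ring. Qed.

Lemma u1_d s k d : 0 < 1 - s*d -> u1f s k d d = - s / (1 - s*d).
Proof.
  intro H. pose proof (wronsk s k d H). unfold u1f.
  apply Rmult_eq_reg_l with (1 - s*d). 2: lra.
  transitivity (- ((1 - s*d) * (Af s k d * B1f s k d - A1f s k d * Bf s k d))). ring.
  rewrite H0. field. lra.
Qed.

Lemma A_pos s k x : 0 <= k -> 0 < Af s k x.
Proof.
  intro Hk. unfold Af. pose proof (P_ge1 (wv s k x)).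
  assert (0 <= wv s k x) by (unfold wv; apply Rmult_le_pos; auto; apply pow2_ge_0). 
  specialize (H H0). lra.
Qed.

Lemma u_pos s k d x : 0 < s -> 0 <= k -> 0 <= x < d ->
  (forall t, x <= t <= d -> 0 < 1 - s*t) -> 0 < uf s k d x.
Proof.
  intros Hs Hk Hx Hy.
  set (R := fun t => Bf s k t / Af s k t).
  assert (DR : forall t, x <= t <= d -> is_derive R t (s / ((1 - s*t) * (Af s k t)^2))).
  { intros t Ht. unfold R. specialize (Hy t Ht).
    pose proof (dA s k t). pose proof (dB s k t Hy). pose proof (A_pos s k t Hk).
    pose proof (wronsk s k t Hy).
    auto_derive. repeat split; try (eexists; eauto). lra.
    rewrite (Dun _ _ _ H), (Dun _ _ _ H0).
    assert (E : Af s k t * B1f s k t - A1f s k t * Bf s k t = s / (1 - s*t))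
      by (apply Rmult_eq_reg_l with (1 - s*t); [rewrite H2; field; lra | lra]).
    transitivity ((Af s k t * B1f s k t - A1f s k t * Bf s k t) / (Af s k t)^2).
    field; lra. rewrite E. field; lra. }
  destruct (mvt_open R (fun t => s / ((1 - s*t) * (Af s k t)^2)) x d) as [c [HE Hc]]. lra.
  intros; apply DR; auto.
  assert (0 < s / ((1 - s*c) * (Af s k c)^2)).
  { pose proof (A_pos s k c Hk). specialize (Hy c ltac:(lra)).
    apply Rdiv_lt_0_compat; auto. apply Rmult_lt_0_compat; auto. apply pow_lt; auto. }
  assert (0 < R d - R x) by (rewrite HE; apply Rmult_lt_0_compat; lra).
  unfold R in H0. pose proof (A_pos s k x Hk). pose proof (A_pos s k d Hk).
  unfold uf.
  replace (Bf s k d * Af s k x - Af s k d * Bf s k x) with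
    (Af s k x * Af s k d * (Bf s k d / Af s k d - Bf s k x / Af s k x)) by (field; lra).
  apply Rmult_lt_0_compat; auto. apply Rmult_lt_0_compat; auto.
Qed.

Definition Gf s k d := uf s k d 0 + u1f s k d 0.

Lemma G_cont s d : continuity (fun k => Gf s k d).
Proof.
  intro k. apply exd_cont.
  unfold Gf, uf, u1f, Af, A1f, Bf, B1f, wv.
  auto_derive. repeat split; auto using exP, exP1, exQ, exQ1.
Qed.


Lemma ineq_lower t m e : 0 < e -> 0 <= t -> t <= 1/2 -> t <= e/8 -> 0 <= m -> m <= e/8 ->
  0 < t/2 - m + t^2/8 - t*m/4 - t^3/8 + e*(1-t)*(1+t^2/4).
Proof.
  intros. assert (t*m <= e/16) by nra. assert (t^3 <= e/32) by nra.
  assert (0 <= t^2) by nra. assert (e/2 <= e*(1-t)*(1+t^2/4)) by (assert (0<= e*t^2) by nra; nra). nra.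
Qed.
Lemma ineq_upper t m e s : 0 < e -> 0 <= t -> t <= 1/2 -> t <= e/8 -> 0 <= m -> 0 <= s <= 1 ->
  0 < -(t/2 - m + t^2/8 - t*m/4 - t^3/8) - (e/16)*(2 + s - 2*t + s*t/2 - t^2 - s*t^2/2)
      + e*(1-t)*(1 + (e/16)*s*t + t^2/4).
Proof.
  intros. assert (0 <= t*m) by nra. assert (0 <= t^3) by nra. assert (t^2 <= e/16) by nra.
  assert (2 + s - 2*t + s*t/2 - t^2 - s*t^2/2 <= 13/4) by nra.
  assert (0 <= (e/16)*s*t) by (apply Rmult_le_pos; [apply Rmult_le_pos|]; lra).
  assert (e/2 <= e*(1-t)*(1 + (e/16)*s*t + t^2/4)) by (assert (0 <= e*(1-t)*((e/16)*s*t + t^2/4)) by (apply Rmult_le_pos; nra); nra).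
  nra.
Qed.

Definition ph a s x := exp (-x) * (1 + a*x + s^2*x^2/4).
Definition ph1 a s x := exp (-x) * (a + s^2*x/2 - (1 + a*x + s^2*x^2/4)).
Definition ph2 a s x := exp (-x) * (s^2/2 - 2*(a + s^2*x/2) + (1 + a*x + s^2*x^2/4)).

Lemma dph a s x : is_derive (ph a s) x (ph1 a s x).
Proof. unfold ph, ph1. auto_derive. auto. field. Qed.
Lemma dph1 a s x : is_derive (ph1 a s) x (ph2 a s x).
Proof. unfold ph1, ph2. auto_derive. auto. field. Qed.

Lemma bracket_id al mu s x :
  let t := s*x in let m := s*x^2 in
  -s * ph1 (al*s^2) s x + (1-s*x) * ph2 (al*s^2) s x
    + (-1 - s - s^2/2 + mu*s^2) * (1-s*x) * ph (al*s^2) s x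
  = exp (-x) * s^2 * (-(t/2 - m + t^2/8 - t*m/4 - t^3/8)
      - al*(2 + s - 2*t + s*t/2 - t^2 - s*t^2/2) + mu*(1-t)*(1 + al*s*t + t^2/4)).
Proof. intros t m. unfold t, m, ph, ph1, ph2. field. Qed.

Lemma u0_lower s k d : 0 < s -> 0 <= k -> 0 < d ->
  (forall x, 0 <= x <= d -> 0 < 1 - s*x) -> s*d <= uf s k d 0.
Proof.
  intros Hs Hk Hd Hy.
  assert (Hu : forall x, 0 <= x <= d -> 0 <= uf s k d x).
  { intros x Hx. destruct (Req_dec x d) as [->|]. rewrite u_d; lra.
    left. apply u_pos; auto. lra. intros; apply Hy; lra. }
  set (V := fun x => (1 - s*x) * u1f s k d x).
  assert (DV : forall x, 0 <= x <= d -> is_derive V x (4*s^2*k*(1-s*x)*uf s k d x)).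
  { intros x Hx. specialize (Hy x Hx). pose proof (du1 s k d x Hy). pose proof (ode_u s k d x Hy).
    unfold V. auto_derive. eexists; eauto.
    rewrite (Dun _ _ _ H).
    assert (u2f s k d x = s/(1-s*x) * u1f s k d x + 4*s^2*k * uf s k d x) by lra.
    rewrite H1. field. lra. }
  assert (Hu1 : forall c, 0 < c < d -> u1f s k d c <= - s).
  { intros c Hc.
    destruct (mvt_open V (fun x => 4*s^2*k*(1-s*x)*uf s k d x) c d) as [c' [HE Hc']]. lra.
    intros; apply DV; lra.
    assert (0 <= 4*s^2*k*(1-s*c')*uf s k d c').
    { specialize (Hy c' ltac:(lra)). specialize (Hu c' ltac:(lra)).
      apply Rmult_le_pos; auto. apply Rmult_le_pos; [|lra]. apply Rmult_le_pos; [|lra]. nra. }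
    assert (V c <= V d) by nra.
    unfold V in H0. assert (Hyd := Hy d ltac:(lra)). rewrite u1_d in H0 by lra.
    specialize (Hy c ltac:(lra)).
    replace ((1 - s * d) * (- s / (1 - s * d))) with (- s) in H0 by (field; lra).
    assert (1 - s*c <= 1) by nra.
    destruct (Rle_dec (u1f s k d c) 0) as [Hn|Hn]; [|nra].
    nra. }
  destruct (mvt_open (uf s k d) (u1f s k d) 0 d) as [c [HE Hc]]; auto.
  intros; apply du; apply Hy; lra.
  rewrite u_d in HE. specialize (Hu1 c Hc). nra.
Qed.

Lemma G_neg s k d e : 0 < s <= 1 -> 0 < d -> 0 < e -> s*d <= 1/2 -> s*d <= e/8 -> s*d^2 <= e/8 ->
  -4*s^2*k = -1 - s - s^2/2 - e*s^2 -> Gf s k d < 0.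
Proof.
  intros Hs Hd He H1 H2 H3 Hk.
  assert (Hk0 : 0 <= k) by nra.
  assert (Hy : forall x, 0 <= x <= d -> 0 < 1 - s*x) by (intros; nra).
  pose proof (sturm_W s d (-4*s^2*k) (uf s k d) (u1f s k d) (u2f s k d)
     (ph (0*s^2) s) (ph1 (0*s^2) s) (ph2 (0*s^2) s) 0 d ltac:(lra) Hd ltac:(lra) Hy) as HS.
  assert (HW : (1 - s * d) * (ph1 (0*s^2) s d * uf s k d d - ph (0*s^2) s d * u1f s k d d) <
               (1 - s * 0) * (ph1 (0*s^2) s 0 * uf s k d 0 - ph (0*s^2) s 0 * u1f s k d 0)).
  { apply HS.
    - intros x Hx; apply du, Hy, Hx.
    - intros x Hx; apply du1, Hy, Hx.
    - intros x Hx; apply dph.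
    - intros x Hx; apply dph1.
    - intros x Hx; apply ode_u, Hy, Hx.
    - intros x Hx. rewrite Hk.
      replace (-1 - s - s^2/2 - e*s^2) with (-1 - s - s^2/2 + (-e)*s^2) by ring.
      rewrite (bracket_id 0 (-e) s x).
      assert (0 < uf s k d x) by (apply u_pos; [lra|lra|lra| intros; apply Hy; lra]).
      assert (0 < s^2) by nra. pose proof (exp_pos (-x)).
      assert (s*x <= s*d) by nra. assert (s*x^2 <= s*d^2) by (apply Rmult_le_compat_l; nra).
      pose proof (ineq_lower (s*x) (s*x^2) e He ltac:(nra) ltac:(lra) ltac:(lra) ltac:(nra) ltac:(lra)).
      set (t := s*x) in *. set (m := s*x^2) in *.
      assert (0 < exp (-x) * s^2) by nra.
      replace (- (t / 2 - m + t ^ 2 / 8 - t * m / 4 - t ^ 3 / 8) -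
        0 * (2 + s - 2 * t + s * t / 2 - t ^ 2 - s * t ^ 2 / 2) +
        - e * (1 - t) * (1 + 0 * s * t + t ^ 2 / 4))
      with (- (t / 2 - m + t ^ 2 / 8 - t * m / 4 - t ^ 3 / 8 + e * (1 - t) * (1 + t ^ 2 / 4))) by ring.
      assert (0 < exp (-x) * s^2 * (t / 2 - m + t ^ 2 / 8 - t * m / 4 - t ^ 3 / 8 + e * (1 - t) * (1 + t ^ 2 / 4))) by (apply Rmult_lt_0_compat; auto).
      nra. }
  rewrite u_d, u1_d in HW by (apply Hy; lra).
  assert (E1 : ph1 (0*s^2) s 0 = -1) by (unfold ph1; rewrite Ropp_0, exp_0; field).
  assert (E0 : ph (0*s^2) s 0 = 1) by (unfold ph; rewrite Ropp_0, exp_0; field).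
  rewrite E1, E0 in HW.
  assert (0 < ph (0*s^2) s d) by (unfold ph; apply Rmult_lt_0_compat; [apply exp_pos| nra]).
  assert (Hyd := Hy d ltac:(lra)).
  replace ((1 - s * d) * (ph1 (0 * s ^ 2) s d * 0 - ph (0 * s ^ 2) s d * (- s / (1 - s * d))))
    with (s * ph (0*s^2) s d) in HW by (field; lra).
  unfold Gf. assert (0 < s * ph (0 * s ^ 2) s d) by nra. lra.
Qed.

Lemma G_pos s k d e : 0 < s <= 1 -> 0 < d -> 0 < e -> s*d <= 1/2 -> s*d <= e/8 ->
  e*s^2 <= 1 -> 4 * exp (-d) <= (e/16*s^2) * d -> exp (-d) <= 1/2 ->
  -4*s^2*k = -1 - s - s^2/2 + e*s^2 -> 0 < Gf s k d.
Proof.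
  intros Hs Hd He H1 H2 H3 H4 H5 Hk.
  assert (Hk0 : 0 <= k) by nra.
  assert (Hy : forall x, 0 <= x <= d -> 0 < 1 - s*x) by (intros; nra).
  set (a := e/16*s^2) in *.
  pose proof (sturm_W s d (-4*s^2*k) (uf s k d) (u1f s k d) (u2f s k d)
     (fun x => - ph a s x) (fun x => - ph1 a s x) (fun x => - ph2 a s x) 0 d ltac:(lra) Hd ltac:(lra) Hy) as HS.
  assert (HW : (1 - s * d) * (- ph1 a s d * uf s k d d - - ph a s d * u1f s k d d) <
               (1 - s * 0) * (- ph1 a s 0 * uf s k d 0 - - ph a s 0 * u1f s k d 0)).
  { apply HS.
    - intros x Hx; apply du, Hy, Hx.
    - intros x Hx; apply du1, Hy, Hx.
    - intros x Hx. apply (is_derive_opp (ph a s)), dph.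
    - intros x Hx. apply (is_derive_opp (ph1 a s)), dph1.
    - intros x Hx; apply ode_u, Hy, Hx.
    - intros x Hx. rewrite Hk.
      replace (-s * - ph1 a s x + (1-s*x) * - ph2 a s x + (-1 - s - s^2/2 + e*s^2) * (1-s*x) * - ph a s x)
        with (- (-s * ph1 a s x + (1-s*x) * ph2 a s x + (-1 - s - s^2/2 + e*s^2) * (1-s*x) * ph a s x)) by ring.
      unfold a. rewrite (bracket_id (e/16) e s x).
      assert (0 < uf s k d x) by (apply u_pos; [lra|lra|lra| intros; apply Hy; lra]).
      assert (0 < s^2) by nra. pose proof (exp_pos (-x)).
      assert (s*x <= s*d) by nra.
      pose proof (ineq_upper (s*x) (s*x^2) e s He ltac:(nra) ltac:(lra) ltac:(lra) ltac:(nra) ltac:(lra)).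
      set (t := s*x) in *. set (m := s*x^2) in *.
      assert (0 < exp (-x) * s^2) by nra.
      match goal with |- _ * (- (_ * ?Z)) < 0 => set (ZZ := Z) in * end.
      assert (0 < uf s k d x * (exp (- x) * s ^ 2 * ZZ)) by (apply Rmult_lt_0_compat; [auto| apply Rmult_lt_0_compat; [auto| unfold ZZ; auto]]).
      lra. }
  rewrite u_d, u1_d in HW by (apply Hy; lra).
  assert (E1 : ph1 a s 0 = a - 1) by (unfold ph1; rewrite Ropp_0, exp_0; field).
  assert (E0 : ph a s 0 = 1) by (unfold ph; rewrite Ropp_0, exp_0; field).
  rewrite E1, E0 in HW.
  assert (Hyd := Hy d ltac:(lra)).
  replace ((1 - s * d) * (- ph1 a s d * 0 - - ph a s d * (- s / (1 - s * d))))
    with (- (s * ph a s d)) in HW by (field; lra).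
  pose proof (u0_lower s k d ltac:(lra) Hk0 Hd Hy).
  unfold Gf.
  assert (ph a s d < a * d).
  { unfold ph. assert (0 <= (s*d)^2) by nra. assert (0 < a) by (unfold a; nra).
    replace (s^2*d^2/4) with ((s*d)^2/4) by field.
    pose proof (exp_pos (-d)).
    assert ((s*d)^2 <= 1/4) by (assert (0 <= s*d) by (apply Rmult_le_pos; lra); nra).
    assert (0 <= (1/2 - exp (-d)) * (a*d)) by (apply Rmult_le_pos; nra).
    assert (exp (-d) * ((s*d)^2/4) <= exp (-d) / 16) by nra.
    lra. }
  assert (0 < s) by lra.
  assert (0 < a) by (unfold a; nra).
  assert (s * (a * d) <= a * uf s k d 0) by (replace (s*(a*d)) with (a*(s*d)) by ring; apply Rmult_le_compat_l; lra).
  assert (s * ph a s d < s * (a * d)) by (apply Rmult_lt_compat_l; lra).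
  lra.
Qed.

Lemma exp_le_mono x y : x <= y -> exp x <= exp y.
Proof. intros [H | ->]; [left; apply exp_increasing; auto| lra]. Qed.

Lemma exp_sq_lower y : 0 <= y -> y^2/4 <= exp y.
Proof.
  intro Hy. replace y with (y/2 + y/2) at 2 by field. rewrite exp_plus.
  assert (y/2 <= exp (y/2)).
  { destruct (Req_dec (y/2) 0) as [e|n]. rewrite e, exp_0; lra.
    pose proof (exp_ineq1 (y/2) n). lra. }
  nra.
Qed.

Lemma le_div_mul a b c : 0 < c -> a / c <= b -> a <= c * b.
Proof. intros Hc H. replace a with (c * (a/c)) by (field; lra). apply Rmult_le_compat_l; lra. Qed.

Lemma params rho e : 1/4 < rho < 1/2 -> 0 < e -> exists h0, 0 < h0 /\ forall h, 0 < h < h0 -> h < 1 ->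
  0 < sqrt h <= 1 /\ 0 < Rpower h (rho - 1/2) /\
  sqrt h * Rpower h (rho - 1/2) <= 1/2 /\ sqrt h * Rpower h (rho - 1/2) <= e/8 /\
  sqrt h * Rpower h (rho - 1/2) ^ 2 <= e/8 /\ e * sqrt h ^ 2 <= 1 /\
  4 * exp (- Rpower h (rho - 1/2)) <= (e/16 * sqrt h ^ 2) * Rpower h (rho - 1/2) /\
  exp (- Rpower h (rho - 1/2)) <= 1/2.
Proof.
  intros Hr He.
  set (sg := 1/2 - rho). set (bt := 2*rho - 1/2).
  set (c1 := Rmin (1/2) (e/8)).
  assert (Hc1 : 0 < c1) by (unfold c1, Rmin; destruct Rle_dec; lra).
  set (C := Rabs (ln 64 - ln e)).
  set (Y := 8/sg + 4*C + 4).
  set (L0 := Rmax (Rmax (Rabs (ln c1) / rho) (Rabs (ln (e/8)) / bt))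
                  (Rmax (Rabs (ln e)) (Rmax (Y / sg) 1))).
  exists (exp (- L0)). split. apply exp_pos.
  intros h [Hh0 Hh] Hh1.
  set (L := - ln h).
  assert (HL : L0 < L).
  { unfold L. apply ln_increasing in Hh; auto. rewrite ln_exp in Hh. lra. }
  assert (Hhe : h = exp (- L)) by (unfold L; rewrite Ropp_involutive, exp_ln; auto).
  assert (HL0 : Rabs (ln c1) / rho <= L0 /\ Rabs (ln (e/8)) / bt <= L0 /\ Rabs (ln e) <= L0 /\ Y/sg <= L0 /\ 1 <= L0).
  { unfold L0. unfold Rmax. repeat destruct Rle_dec; repeat split; lra. }
  destruct HL0 as [L1 [L2 [L3 [L4 L5]]]].
  assert (Hsg : 0 < sg) by (unfold sg; lra).
  assert (Hbt : 0 < bt) by (unfold bt; lra).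
  assert (Hs : sqrt h = exp (- L / 2)).
  { rewrite Hhe. replace (exp (-L)) with (exp (-L/2) * exp (-L/2)) by (rewrite <- exp_plus; f_equal; field).
    apply sqrt_square. left; apply exp_pos. }
  assert (Hd : Rpower h (rho - 1/2) = exp (sg * L)).
  { unfold Rpower. unfold L, sg. f_equal. ring. }
  rewrite Hs, Hd.
  assert (E1 : exp (- L / 2) * exp (sg * L) = exp (- rho * L)) by (rewrite <- exp_plus; f_equal; unfold sg; field).
  assert (E2 : exp (- L / 2) * exp (sg * L) ^ 2 = exp (- bt * L)).
  { simpl. rewrite Rmult_1_r. rewrite <- !exp_plus. f_equal. unfold sg, bt. field. }
  assert (E3 : exp (- L / 2) ^ 2 = exp (- L)) by (simpl; rewrite Rmult_1_r, <- exp_plus; f_equal; field).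
  rewrite E1, E2, E3.
  assert (Hc1' : exp (- rho * L) <= c1).
  { rewrite <- (exp_ln c1) by auto. apply exp_le_mono.
    assert (Rabs (ln c1) <= rho * L).
    { apply le_div_mul; lra. }
    pose proof (Rle_abs (- ln c1)). rewrite Rabs_Ropp in H0. lra. }
  assert (Hy0 : 1 <= sg * L).
  { assert (Y <= sg * L).
    { apply le_div_mul; lra. }
    assert (0 <= C) by apply Rabs_pos.
    assert (0 < 8/sg) by (apply Rdiv_lt_0_compat; lra). unfold Y in H. lra. }
  assert (Hd1 : 1 <= exp (sg * L)).
  { pose proof (exp_ineq1 (sg*L) ltac:(lra)). lra. }
  assert (Hexp1 : exp (- exp (sg * L)) <= 1/2).
  { assert (exp (- exp (sg*L)) <= exp (- (1))) by (apply exp_le_mono; lra).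
    assert (2 < exp 1) by (pose proof (exp_ineq1 1 ltac:(lra)); lra).
    assert (exp (- (1)) < 1/2).
    { rewrite exp_Ropp. apply Rmult_lt_reg_l with (exp 1). lra.
      rewrite Rinv_r by (apply Rgt_not_eq; lra). clear -H0; lra. }
    lra. }
  repeat split.
  - apply exp_pos.
  - rewrite <- exp_0. apply exp_le_mono. lra.
  - apply exp_pos.
  - unfold c1, Rmin in Hc1'; destruct Rle_dec; lra.
  - unfold c1, Rmin in Hc1'; destruct Rle_dec; lra.
  - rewrite <- (exp_ln (e/8)) by lra. apply exp_le_mono.
    assert (Rabs (ln (e/8)) <= bt * L).
    { apply le_div_mul; lra. }
    pose proof (Rle_abs (- ln (e/8))). rewrite Rabs_Ropp in H0. lra.
  - rewrite <- (exp_ln e) at 1 by lra. rewrite <- exp_plus, <- exp_0. apply exp_le_mono.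
    pose proof (Rle_abs (ln e)). lra.
  -
    set (y := sg * L) in *.
    assert (Hyy : y / sg = L) by (unfold y; field; lra).
    assert (0 <= C) by apply Rabs_pos.
    assert (Hkey : y / sg + C <= exp y).
    { pose proof (exp_sq_lower y ltac:(lra)).
      assert (Y <= y).
      { unfold y. apply le_div_mul; lra. }
      assert (y / sg <= y * (2/sg)).
      { unfold Rdiv. rewrite <- Rmult_assoc. rewrite (Rmult_comm y 2).
        apply Rmult_le_compat_r. left; apply Rinv_0_lt_compat; lra. lra. }
      assert (y * (2/sg) + C + y <= y^2/4).
      { unfold Y in H1. assert (0 < 2/sg) by (apply Rdiv_lt_0_compat; lra).
        assert (8/sg = 4*(2/sg)) by (field; lra). nra. }
      lra. }
    rewrite Hyy in Hkey.
    replace (e / 16 * exp (- L) * exp y) with (exp (ln e - L + y - ln 16)).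
    2:{ unfold Rminus. rewrite !exp_plus, (exp_Ropp (ln 16)), !exp_ln by lra.
        field. }
    replace 4 with (exp (ln 4)) by (apply exp_ln; lra).
    rewrite <- exp_plus. apply exp_le_mono.
    assert (ln 64 = ln 4 + ln 16) by (rewrite <- ln_mult by lra; f_equal; lra).
    pose proof (Rle_abs (ln 64 - ln e)) as Hab. fold C in Hab.
    lra.
  - exact Hexp1.
Qed.

Lemma eig_to_isd h rho lam u u1 u2 : is_eigenfunction h rho lam u u1 u2 ->
  (forall x, 0 <= x <= delta h rho -> is_derive u x (u1 x)) /\
  (forall x, 0 <= x <= delta h rho -> is_derive u1 x (u2 x)) /\
  u1 0 = - u 0 /\ u (delta h rho) = 0 /\
  (forall x, 0 <= x <= delta h rho -> - u2 x + sqrt h / (1 - sqrt h * x) * u1 x = lam * u x) /\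
  (exists x, 0 <= x <= delta h rho /\ u x <> 0).
Proof.
  intros [D1 [D2 [HR [HZ [HE HX]]]]].
  refine (conj _ (conj _ (conj HR (conj HZ (conj HE HX))))).
  - intros y Hy; apply is_derive_Reals; auto.
  - intros y Hy; apply is_derive_Reals; auto.
Qed.

Theorem lemma2p5 (rho : R) (Hrho : 1/4 < rho < 1/2) :
  forall eps : R, 0 < eps ->
  exists h0 : R, 0 < h0 /\
  forall h : R, 0 < h < h0 -> h < 1 -> Rpower h (1/2 - rho) < 1/3 ->
  exists lam : R, is_lowest_eigenvalue h rho lam /\
    Rabs (lam - (-1 - sqrt h - h / 2)) <= eps * h.
Proof.
  intros eps Heps.
  destruct (params rho eps Hrho Heps) as [h0 [Hh0 HP]].
  exists h0; split; auto.
  intros h Hh Hh1 _.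
  destruct (HP h Hh Hh1) as [Hs1 [Hd [T1 [T2 [M1 [E1 [X1 X2]]]]]]].
  assert (Hss : sqrt h ^ 2 = h) by (simpl; rewrite Rmult_1_r; apply sqrt_sqrt; lra).
  change (Rpower h (rho - 1/2)) with (delta h rho) in *.
  set (s := sqrt h) in *. set (d := delta h rho) in *.
  assert (Hy : forall x, 0 <= x <= d -> 0 < 1 - s*x) by (intros; nra).
  assert (Hs2 : 0 < s^2) by nra.
  set (ka := (1 + s + s^2/2 + eps*s^2)/(4*s^2)).
  set (kb := (1 + s + s^2/2 - eps*s^2)/(4*s^2)).
  assert (Hka : -4*s^2*ka = -1 - s - s^2/2 - eps*s^2) by (unfold ka; field; lra).
  assert (Hkb : -4*s^2*kb = -1 - s - s^2/2 + eps*s^2) by (unfold kb; field; lra).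
  assert (Gka : Gf s ka d < 0) by (apply (G_neg s ka d eps); auto; lra).
  assert (Gkb : 0 < Gf s kb d) by (apply (G_pos s kb d eps); auto; lra).
  assert (Hab : kb < ka) by (unfold ka, kb; apply Rmult_lt_compat_r; [apply Rinv_0_lt_compat; lra| nra]).
  destruct (IVT (fun k => - Gf s k d) kb ka) as [k [Hk HG]]; auto.
  { apply continuity_opp, G_cont. }
  { lra. }
  { lra. }
  assert (Hk0 : 0 <= k).
  { assert (0 <= kb) by (unfold kb; apply Rmult_le_pos; [nra | left; apply Rinv_0_lt_compat; lra]). lra. }
  set (lam := -4*s^2*k).
  assert (HGk : uf s k d 0 + u1f s k d 0 = 0) by (unfold Gf in HG; lra).
  assert (Upos : forall x, 0 <= x < d -> 0 < uf s k d x).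
  { intros x Hx. apply u_pos; auto; [lra| intros; apply Hy; lra]. }
  exists lam. split.
  - split.
    + exists (uf s k d), (u1f s k d), (u2f s k d).
      repeat split.
      * intros x Hx. apply is_derive_Reals, du, Hy, Hx.
      * intros x Hx. apply is_derive_Reals, du1, Hy, Hx.
      * lra.
      * apply u_d.
      * intros x Hx. apply ode_u, Hy, Hx.
      * exists 0. fold d. specialize (Upos 0 ltac:(lra)). split. split; lra. apply Rgt_not_eq; lra.
    + intros mu [w [w1 [w2 Hw]]].
      apply eig_to_isd in Hw.
      destruct Hw as [Dw [Dw1 [Rw [Wd [Ew [x1 [Hx1 Hwx1]]]]]]].
      fold d in Dw, Dw1, Wd, Ew, Hx1. fold s in Ew.
      assert (Vd : 0 <= uf s k d d) by (rewrite u_d; lra).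
      destruct (Rlt_dec 0 (w x1)) as [Hp|Hn].
      * apply (minimal_pos s d lam mu (uf s k d) (u1f s k d) (u2f s k d) w w1 w2 x1); auto.
        -- intros x Hx; apply du, Hy, Hx.
        -- intros x Hx; apply du1, Hy, Hx.
        -- intros x Hx; apply ode_u, Hy, Hx.
        -- lra.
      * apply (minimal_pos s d lam mu (uf s k d) (u1f s k d) (u2f s k d)
                (fun x => - w x) (fun x => - w1 x) (fun x => - w2 x) x1); auto.
        -- intros x Hx; apply du, Hy, Hx.
        -- intros x Hx; apply du1, Hy, Hx.
        -- intros x Hx; apply (is_derive_opp w), Dw, Hx.
        -- intros x Hx; apply (is_derive_opp w1), Dw1, Hx.
        -- intros x Hx; apply ode_u, Hy, Hx.
        -- intros x Hx. specialize (Ew x Hx). lra.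
        -- lra.
        -- lra.
        -- lra.
        -- assert (w x1 <> 0) by auto. lra.
  - assert (lam <= -1 - s - s^2/2 + eps*s^2).
    { unfold lam. rewrite <- Hkb. nra. }
    assert (-1 - s - s^2/2 - eps*s^2 <= lam).
    { unfold lam. rewrite <- Hka. nra. }
    rewrite <- Hss. apply Rabs_le. split; lra.
Qed.
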